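(* Let $\mathcal{B}$ be a finite relational structure with domain $B$ over signature $\sigma$, and let $f$ be a shop on $B$ that is an equivalence relation (i.e. there is an equivalence relation $\sim$ on $B$ with $f(x)$ equal to the $\sim$-class of $x$ for every $x$) and that is a she of $\mathcal{B}$. Then for every sentence $\varphi$ of $\{\exists,\forall,\wedge,\vee\}$-FO over $\sigma$, $\mathcal{B}\models\varphi$ if and only if $\mathcal{B}_{/f}\models\varphi$; that is, the problems $\{\exists,\forall,\wedge,\vee\}$-FO$(\mathcal{B})$ and $\{\exists,\forall,\wedge,\vee\}$-FO$(\mathcal{B}_{/f})$ coincide.
   Context: $\{\exists,\forall,\wedge,\vee\}$-FO is the positive equality-free fragment of first-order logic: formulas built from atomic formulas $R(w_1,\ldots,w_r)$ ($R\in\sigma$) using only $\wedge,\vee,\exists,\forall$. The problem $\{\exists,\forall,\wedge,\vee\}$-FO$(\mathcal{C})$ takes as input such a sentence and asks whether $\mathcal{C}$ satisfies it. A shop on $B$ is a map $f:B\to\mathcal{P}(B)\setminus\{\emptyset\}$ such that every $y\in B$ lies in some $f(x)$. A she of $\mathcal{B}$ is a shop $f$ such that for every $R\in\sigma$ of arity $i$, if $\mathcal{B}\models R(x_1,\ldots,x_i)$ then $\mathcal{B}\models R(y_1,\ldots,y_i)$ for all $y_j\in f(x_j)$. For $f$ an equivalence relation, $\mathcal{B}_{/f}$ is the $\sigma$-structure whose elements are the equivalence classes of $f$, in which $R(\tilde b_1,\ldots,\tilde b_r)$ holds iff $\mathcal{B}\models R(b_1,\ldots,b_r)$ for some representatives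 $b_j\in\tilde b_j$. *)

(* Defs.v *)
From mathcomp Require Import all_boot.
Set Implicit Arguments.
Unset Strict Implicit.
Unset Printing Implicit Defensive.

Section FO.
Variables (S : Type) (ar : S -> nat).

Record structure := Structure {
  dom :> finType;
  interp : forall R : S, (ar R).-tuple dom -> bool
}.

Inductive form :=
  | Atom (R : S) (w : (ar R).-tuple nat)
  | And (p q : form)
  | Or (p q : form)
  | Ex (x : nat) (p : form)
  | All (x : nat) (p : form).

Fixpoint fv (p : form) : seq nat :=
  match p with
  | Atom _ w => val w
  | And p q | Or p q => fv p ++ fv q
  | Ex x p | All x p => filter (fun y => y != x) (fv p)
  end.

Definition sentence (p : form) : Prop := fv p = [::].

Definition upd (T : Type) (env : nat -> T) (x : nat) (b : T) : nat -> T :=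
  fun y => if y == x then b else env y.

Fixpoint sat (M : structure) (env : nat -> M) (p : form) : Prop :=
  match p with
  | Atom R w => interp (map_tuple env w)
  | And p q => sat env p /\ sat env q
  | Or p q => sat env p \/ sat env q
  | Ex x p => exists b : M, sat (upd env x b) p
  | All x p => forall b : M, sat (upd env x b) p
  end.

(* M |= p (for a sentence p, on a nonempty domain, the environment is irrelevant). *)
Definition models (M : structure) (p : form) : Prop := forall env : nat -> M, sat env p.

Definition is_shop (B : finType) (f : B -> {set B}) : Prop :=
  (forall x, f x != set0) /\ (forall y, exists x, y \in f x).

Definition is_equiv_shop (B : finType) (f : B -> {set B}) : Prop :=
  exists r : rel B, equivalence_rel r /\ forall x, f x = [set y | r x y].

Definition is_she (M : structure) (f : M -> {set M}) : Prop :=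
  is_shop f /\
  forall (R : S) (t u : (ar R).-tuple M),
    interp t -> (forall i, tnth u i \in f (tnth t i)) -> interp u.

Definition classes (M : structure) (f : M -> {set M}) : {set {set M}} :=
  [set f x | x in M].

Definition quot_dom (M : structure) (f : M -> {set M}) : finType :=
  {C : {set M} | C \in classes f}.

Definition quot_rel (M : structure) (f : M -> {set M}) (R : S)
  (t : (ar R).-tuple (quot_dom f)) : bool :=
  [exists u : (ar R).-tuple M,
     [forall i, tnth u i \in val (tnth t i)] && interp u].

Definition quotient (M : structure) (f : M -> {set M}) : structure :=
  @Structure (quot_dom f) (@quot_rel M f).

End FO.

(* Main.v *)
Require Import Defs.
From mathcomp Require Import all_boot.
Set Implicit Arguments.
Unset Strict Implicit.

Section Aux.
Variables (S : Type) (ar : S -> nat) (M : structure ar) (f : M -> {set M}).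

Lemma in_cls (x : M) : f x \in classes f.
Proof. by apply/imsetP; exists x. Qed.

Definition proj (x : M) : quotient f := exist _ (f x) (in_cls x).

Lemma proj_surj (c : quotient f) : exists b, proj b = c.
Proof.
case: c => C HC; case/imsetP: (HC) => b _ eC; exists b.
by apply: val_inj => /=.
Qed.

Lemma key (r : rel M) : equivalence_rel r -> (forall x, f x = [set y | r x y]) ->
  is_she f ->
  forall (p : form ar) (env : nat -> M) (envq : nat -> quotient f),
    (forall n, envq n = proj (env n)) -> (sat env p <-> sat envq p).
Proof.
move=> Heq Hf [_ Hshe].
have refl x : x \in f x by rewrite Hf inE; case: (Heq x x x).
have sym x y : y \in f x -> x \in f y.
  rewrite !Hf !inE => Hxy; case: (Heq x y x) => _ H.
  by rewrite -(H Hxy); case: (Heq x x x).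
elim=> [R w|p IHp q IHq|p IHp q IHq|x p IHp|x p IHp] env envq E /=.
- split=> H.
  + apply/existsP; exists (map_tuple env w); apply/andP; split=> //.
    apply/forallP=> i; rewrite !tnth_map E /=; exact: refl.
  + case/existsP: H => u /andP [/forallP Hu Hi].
    apply: (Hshe _ u) => // i.
    have := Hu i; rewrite !tnth_map E /= => Hi'.
    exact: sym.
- by have := IHp env envq E; have := IHq env envq E; tauto.
- by have := IHp env envq E; have := IHq env envq E; tauto.
- have E' b : forall n, upd envq x (proj b) n = proj (upd env x b n).
    by move=> n; rewrite /upd; case: (n == x).
  split=> [[b Hb]|[c Hc]].
  + by exists (proj b); apply/(IHp _ _ (E' b)).
  + case: (proj_surj c) => b eb; subst c; exists b; exact/(IHp _ _ (E' b)).
- have E' b : forall n, upd envq x (proj b) n = proj (upd env x b n).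
    by move=> n; rewrite /upd; case: (n == x).
  split=> H.
  + move=> c; case: (proj_surj c) => b eb; subst c; exact/(IHp _ _ (E' b)).
  + move=> b; exact/(IHp _ _ (E' b)).
Qed.
End Aux.

Theorem lemma3p10 (S : Type) (ar : S -> nat) (M : structure ar)
  (f : M -> {set M}) :
  0 < #|M| ->
  is_shop f -> is_equiv_shop f -> is_she f ->
  forall phi : form ar, sentence phi ->
    (models M phi <-> models (quotient f) phi).
Proof.
move=> _ _ [r [Heq Hf]] Hshe phi _; split=> H env.
- have pre n : exists b, proj f b == env n.
    by case: (proj_surj (env n)) => b eb; exists b; apply/eqP.
  pose g n := xchoose (pre n).
  apply/(key Heq Hf Hshe phi (env := g)); last exact: H.
  by move=> n; rewrite (eqP (xchooseP (pre n))).
- by apply/(key Heq Hf Hshe phi (envq := fun n => proj f (env n))).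
Qed.
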